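(* Let $d, K \ge 1$ be integers, $\lambda>0$, $\epsilon>0$, and let $a^*\in[K]=\{1,\dots,K\}$ be a target arm. For each arm $a\in[K]$ let $X_a\in\mathbb{R}^{m_a\times d}$ (historical contexts), $y_a\in\mathbb{R}^{m_a}$ (historical rewards), $V_a=X_a^\top X_a+\lambda I$, and let $\alpha_a\in\mathbb{R}$ be a fixed number (not depending on the rewards or their modification). For $x\in\mathbb{R}^d$ write $\|x\|_{V_a^{-1}}=\sqrt{x^\top V_a^{-1}x}$. Say that $x$ can be $\epsilon$-strongly attacked into pulling $a^*$ if there exist vectors $\Delta_a\in\mathbb{R}^{m_a}$, $a\in[K]$, such that, with $\hat\theta_a=V_a^{-1}X_a^\top(y_a+\Delta_a)$, $$x^\top\hat\theta_{a^*}+\alpha_{a^*}\|x\|_{V_{a^*}^{-1}}\ \ge\ \epsilon+x^\top\hat\theta_a+\alpha_a\|x\|_{V_a^{-1}}\quad\text{for all } a\neq a^*.$$ Then a context $x\in\mathbb{R}^d$ cannot be $\epsilon$-strongly attacked into pulling $a^*$ if and only if there exists $a\neq a^*$ such that both (i) $x\in\operatorname{Null}(X_{a^*})\cap\operatorname{Null}(X_a)$ and (ii) $\alpha_{a^*}\|x\|_{V_{a^*}^{-1}}<\epsilon+\alpha_a\|x\|_{V_a^{-1}}$ hold.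
   Context: This is the setting of a linear contextual bandit with UCB-type arm selection: after ridge regression on (possibly modified) historical rewards, the algorithm picks for context $x$ the arm maximizing $x^\top\hat\theta_a+\alpha_a\|x\|_{V_a^{-1}}$. An attacker may replace each reward vector $y_a$ by $y_a+\Delta_a$ with arbitrary real $\Delta_a$; the contexts $X_a$ and the exploration parameters $\alpha_a$ are unaffected. $\operatorname{Null}(M)$ denotes the null space $\{x: Mx=0\}$. *)

(* Defs.v *)
From mathcomp Require Import all_boot all_order all_algebra.
Set Implicit Arguments. Unset Strict Implicit. Unset Printing Implicit Defensive.
Import Order.TTheory GRing.Theory Num.Theory.
Local Open Scope ring_scope.

Definition Vmat (R : rcfType) (m d : nat) (X : 'M[R]_(m, d)) (lambda : R)
  : 'M[R]_d := X^T *m X + lambda%:M.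

Definition wnorm (R : rcfType) (d : nat) (V : 'M[R]_d) (x : 'cV[R]_d) : R :=
  Num.sqrt ((x^T *m invmx V *m x) 0 0).

Definition theta_hat (R : rcfType) (m d : nat) (X : 'M[R]_(m, d)) (lambda : R)
  (y' : 'cV[R]_m) : 'cV[R]_d := invmx (Vmat X lambda) *m (X^T *m y').

Definition ucb (R : rcfType) (m d : nat) (X : 'M[R]_(m, d)) (lambda alpha : R)
  (y' : 'cV[R]_m) (x : 'cV[R]_d) : R :=
  (x^T *m theta_hat X lambda y') 0 0 + alpha * wnorm (Vmat X lambda) x.

Definition strongly_attackable (R : rcfType) (d K : nat) (m : 'I_K -> nat)
  (X : forall a : 'I_K, 'M[R]_(m a, d)) (y : forall a : 'I_K, 'cV[R]_(m a))
  (alpha : 'I_K -> R) (lambda eps : R) (astar : 'I_K) (x : 'cV[R]_d) : Prop :=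
  exists Delta : forall a : 'I_K, 'cV[R]_(m a),
    forall a : 'I_K, a != astar ->
      ucb (X astar) lambda (alpha astar) (y astar + Delta astar) x >=
      eps + ucb (X a) lambda (alpha a) (y a + Delta a) x.

(* Main.v *)
Require Import Defs.
From mathcomp Require Import all_boot all_order all_algebra.
From mathcomp Require Import lra.
Import Order.TTheory GRing.Theory Num.Theory.
Set Implicit Arguments. Unset Strict Implicit. Unset Printing Implicit Defensive.
Local Open Scope ring_scope.

Section H.
Variable R : rcfType.

Lemma rsq_ge0 n (r : 'rV[R]_n) : 0 <= (r *m r^T) 0 0.
Proof. rewrite mxE; apply: sumr_ge0 => j _; rewrite mxE; by rewrite -expr2 sqr_ge0. Qed.

Lemma rsq_eq0 n (r : 'rV[R]_n) : (r *m r^T) 0 0 = 0 -> r = 0.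
Proof.
rewrite mxE => H; apply/rowP => j; rewrite mxE.
have h0 : forall i, true -> 0 <= r 0 i * r^T i 0.
  by move=> i _; rewrite mxE -expr2 sqr_ge0.
have := psumr_eq0P h0 H isT (i := j).
by rewrite mxE => /eqP; rewrite mulf_eq0 orbb => /eqP.
Qed.

Lemma V_unit m d (X : 'M[R]_(m, d)) lambda : 0 < lambda -> Vmat X lambda \in unitmx.
Proof.
move=> lp; rewrite -row_free_unit; apply: inj_row_free => v Hv.
have e : v *m Vmat X lambda *m v^T = (v *m X^T) *m (v *m X^T)^T + lambda *: (v *m v^T).
  rewrite /Vmat mulmxDr mulmxDl trmx_mul trmxK !mulmxA; congr (_ + _).
  by rewrite mul_mx_scalar -scalemxAl.
have H : (v *m Vmat X lambda *m v^T) 0 0 = 0 by rewrite Hv mul0mx mxE.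
have H' : ((v *m X^T) *m (v *m X^T)^T) 0 0 + lambda * (v *m v^T) 0 0 = 0.
  by rewrite -H e [in RHS]mxE [X in _ = _ + X]mxE.
clear H; rename H' into H.
 apply: rsq_eq0; apply/eqP; rewrite eq_le rsq_ge0 andbT.
have h1 : 0 <= ((v *m X^T) *m (v *m X^T)^T) 0 0 by apply: rsq_ge0.
have h2 : lambda * (v *m v^T) 0 0 <= 0 by rewrite -H lerDr.
by rewrite -(pmulr_rle0 _ lp).
Qed.


Lemma V_sym m d (X : 'M[R]_(m, d)) lambda : (Vmat X lambda)^T = Vmat X lambda.
Proof. by rewrite /Vmat linearD /= trmx_mul trmxK tr_scalar_mx. Qed.

Lemma r0 m d (X : 'M[R]_(m, d)) lambda (x : 'cV[R]_d) : 0 < lambda ->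
  (x^T *m invmx (Vmat X lambda) *m X^T = 0) <-> X *m x = 0.
Proof.
move=> lp; have uV := V_unit X lp.
have eT : (x^T *m invmx (Vmat X lambda) *m X^T)^T = X *m (invmx (Vmat X lambda) *m x).
  by rewrite !trmx_mul !trmxK trmx_inv V_sym.
split.
- move=> /(congr1 trmx); rewrite eT trmx0 => h.
  have ex : x = Vmat X lambda *m (invmx (Vmat X lambda) *m x) by rewrite mulKVmx.
  rewrite ex; move: h; set z := invmx _ *m x => h.
  rewrite /Vmat mulmxDl mulmxDr -!mulmxA h !mulmx0 add0r.
  by rewrite mul_scalar_mx -scalemxAr h scaler0.
- move=> h; apply: trmx_inj; rewrite eT trmx0.
  have e1 : Vmat X lambda *m x = lambda *: x.
    by rewrite /Vmat mulmxDl -mulmxA h mulmx0 add0r mul_scalar_mx.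
  have e2 : invmx (Vmat X lambda) *m x = lambda^-1 *: x.
    have e3 := mulKmx uV x; rewrite e1 -scalemxAr in e3.
    by rewrite -{2}e3 scalerA mulVf ?scale1r // gt_eqF.
  by rewrite e2 -scalemxAr h scaler0.
Qed.

Lemma ucb_key m d (X : 'M[R]_(m, d)) lambda alpha (y : 'cV[R]_m) (x : 'cV[R]_d) k :
  ucb X lambda alpha (y + (k *: (x^T *m invmx (Vmat X lambda) *m X^T)^T - y)) x =
  k * ((x^T *m invmx (Vmat X lambda) *m X^T) *m (x^T *m invmx (Vmat X lambda) *m X^T)^T) 0 0
  + alpha * wnorm (Vmat X lambda) x.
Proof.
rewrite /ucb /theta_hat [y + _]addrC subrK; congr (_ + _).
by rewrite !mulmxA -scalemxAr mxE.
Qed.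

Lemma ucb_zero m d (X : 'M[R]_(m, d)) lambda alpha (y : 'cV[R]_m) (x : 'cV[R]_d) :
  x^T *m invmx (Vmat X lambda) *m X^T = 0 ->
  ucb X lambda alpha y x = alpha * wnorm (Vmat X lambda) x.
Proof.
by move=> h; rewrite /ucb /theta_hat !mulmxA h mul0mx mxE add0r.
Qed.
End H.

Theorem theorem1 (R : rcfType) (d K : nat) (m : 'I_K -> nat)
  (X : forall a : 'I_K, 'M[R]_(m a, d)) (y : forall a : 'I_K, 'cV[R]_(m a))
  (alpha : 'I_K -> R) (lambda eps : R) (astar : 'I_K) (x : 'cV[R]_d) :
  (1 <= d)%N -> 0 < lambda -> 0 < eps ->
  ~ strongly_attackable X y alpha lambda eps astar x <->
  exists2 a : 'I_K, a != astar &
    [/\ X astar *m x = 0, X a *m x = 0 &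
        alpha astar * wnorm (Vmat (X astar) lambda) x
          < eps + alpha a * wnorm (Vmat (X a) lambda) x].
Proof.
move=> _ lp ep.
set r := fun a => x^T *m invmx (Vmat (X a) lambda) *m (X a)^T.
set s := fun a => (r a *m (r a)^T) 0 0.
set W := fun a => alpha a * wnorm (Vmat (X a) lambda) x.
have s_ge0 : forall a, 0 <= s a by move=> a; apply: rsq_ge0.
have s0 : forall a, s a = 0 -> X a *m x = 0.
  by move=> a /rsq_eq0 h; apply/(r0 _ x lp).
split; last first.
  case=> a na [h1 h2 h3] [D HD]; have := HD a na.
  rewrite (ucb_zero _ _ (proj2 (r0 _ _ lp) h1)) (ucb_zero _ _ (proj2 (r0 _ _ lp) h2)).
  by rewrite leNgt h3.
move=> NA.
case: (boolP [exists a, [&& a != astar, X astar *m x == 0, X a *m x == 0 &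
    W astar < eps + W a]]).
  by case/existsP=> a /and4P [na /eqP h1 /eqP h2 h3]; exists a.
rewrite negb_exists => /forallP Hn; exfalso; apply: NA.
pose S := \sum_b `|W b|.
have WS : forall b, `|W b| <= S.
  move=> b; rewrite /S (bigD1 b) //= lerDl; apply: sumr_ge0 => i _; exact: normr_ge0.
pose M := eps + 2 * S.
have S0 : 0 <= S by apply: sumr_ge0 => i _; exact: normr_ge0.
have M0 : 0 <= M by rewrite /M; lra.
exists (fun a => (if a == astar then M / s a else - (M / s a)) *: (r a)^T - y a).
move=> a na; rewrite /= !ucb_key eqxx (negbTE na).
rewrite -/(r a) -/(r astar) -/(s a) -/(s astar) -/(W a) -/(W astar).
have Wa := WS a; have Ws := WS astar.
have h1 : W a <= `|W a| by exact: ler_norm.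
have h2 : - `|W astar| <= W astar by rewrite lerNl -normrN ler_norm.
have ka : - (M / s a) * s a <= 0.
  by rewrite mulNr oppr_le0 mulr_ge0 // divr_ge0.
have [sz|snz] := eqVneq (s astar) 0.
  rewrite sz mulr0 add0r.
  have [saz|sanz] := eqVneq (s a) 0.
    rewrite saz mulr0 add0r.
    by have := Hn a; rewrite na (s0 _ sz) (s0 _ saz) !eqxx /= -leNgt.
  rewrite mulNr divfK //.
  have t1 : W a <= S by exact: le_trans h1 Wa.
  have t2 : - S <= W astar by apply: le_trans h2; rewrite lerN2.
  have : eps + (- M + W a) <= W astar by rewrite /M; lra.
  exact.
have t1 : W a <= S by exact: le_trans h1 Wa.
have t2 : - S <= W astar by apply: le_trans h2; rewrite lerN2.
have t3 : - (M / s a) * s a + W a <= W a by lra.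
rewrite divfK //.
move: t3; set q := - (M / s a) * s a => t3.
have : eps + (q + W a) <= M + W astar by rewrite /M; clearbody q; lra.
exact.
Qed.
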